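(* Let $0<m<M$, let $A,B\in\mathbb{P}_n^+$ satisfy $mI\le A\le MI$ and $mI\le B\le MI$, and let $f:[0,\infty)\to[0,\infty)$ be a differentiable convex function with $f(0)=0$. Suppose that either (i) $\lambda_j(B)<\lambda_n(A)$ for all $j=1,\dots,n$, or (ii) $\lambda_1(A)<\lambda_j(B)$ for all $j=1,\dots,n$. Then $$(\det(f(A)+f(B)))^{1/n}\le 2^{1-\frac1n}\,\frac{f(M)}{M}\big((\det A)^{1/n}+(\det B)^{1/n}\big).$$
   Context: $\mathbb{P}_n^+$ denotes the set of $n\times n$ complex positive definite matrices, $I$ is the identity matrix, $\le$ is the Löwner order, and $f(A)$ is defined by functional calculus. For a Hermitian matrix $X$, $\lambda_1(X)\ge\dots\ge\lambda_n(X)$ are its eigenvalues in decreasing order. *)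

(* Defs.v *)
From mathcomp Require Import all_boot all_order all_algebra.
From mathcomp Require Import all_classical all_reals all_analysis.
From mathcomp.real_closed Require Export complex.
Set Implicit Arguments. Unset Strict Implicit. Unset Printing Implicit Defensive.
Import Order.TTheory GRing.Theory Num.Theory.
Import numFieldNormedType.Exports.
Local Open Scope classical_set_scope.
Local Open Scope ring_scope.

Section Defs.
Variable R : realType.
Notation C := R[i].

Definition qform n (X : 'M[C]_n) (v : 'rV[C]_n) : C :=
  (v *m X *m map_mx Num.conj (v^T)) 0 0.

Definition posdef n (X : 'M[C]_n) : Prop :=
  X \is hermsymmx /\ forall v : 'rV[C]_n, v != 0 -> 0 < qform X v.

Definition loewner_le n (X Y : 'M[C]_n) : Prop :=
  (Y - X) \is hermsymmx /\ forall v : 'rV[C]_n, 0 <= qform (Y - X) v.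

Definition fcalc (f : R -> R) n (X : 'M[C]_n) : 'M[C]_n :=
  invmx (spectralmx X)
    *m diag_mx (map_mx (fun z : C => ((f (complex.Re z))%:C)%C) (spectral_diag X))
    *m spectralmx X.

(* eigenvalues listed in decreasing order (real parts; they are real for
   Hermitian X) *)
Definition eigs n (X : 'M[C]_n) : seq R :=
  sort (fun a b : R => b <= a)
    [seq complex.Re (spectral_diag X 0 i) | i <- enum 'I_n].

(* lam X j = lambda_{j+1}(X)  (0-based index) *)
Definition lam n (X : 'M[C]_n) (j : nat) : R := nth 0 (eigs X) j.

(* determinant as a real number (it is real positive for X in P_n^+) *)
Definition rdet n (X : 'M[C]_n) : R := complex.Re (\det X).

Definition convex_nonneg (f : R -> R) : Prop :=
  forall x y t : R, 0 <= x -> 0 <= y -> 0 <= t -> t <= 1 ->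
    f (t * x + (1 - t) * y) <= t * f x + (1 - t) * f y.

Definition differentiable_nonneg (f : R -> R) : Prop :=
  (forall x : R, 0 < x -> derivable f x 1) /\
  exists l : R, (fun h : R => h^-1 * (f h - f 0)) @ 0^'+ --> l.

End Defs.

(* Main.v *)
Require Import Defs.
From mathcomp Require Import all_boot all_order all_algebra.
From mathcomp Require Import all_classical all_reals all_analysis.
From mathcomp.real_closed Require Import complex.
From mathcomp Require Import ring.
Import Order.TTheory GRing.Theory Num.Theory.
Local Open Scope ring_scope.
Set Implicit Arguments. Unset Strict Implicit. Unset Printing Implicit Defensive.

Section Gen.
Variable C : numClosedFieldType.

Definition ct m n (X : 'M[C]_(m, n)) : 'M[C]_(n, m) := map_mx Num.conj X^T.
Definition qf n (X : 'M[C]_n) (v : 'rV[C]_n) : C := (v *m X *m ct v) 0 0.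

Lemma ctK m n (X : 'M[C]_(m, n)) : ct (ct X) = X.
Proof. by apply/matrixP => i j; rewrite !mxE conjCK. Qed.

Lemma ct_mul m n p (X : 'M[C]_(m, n)) (Y : 'M[C]_(n, p)) :
  ct (X *m Y) = ct Y *m ct X.
Proof. by rewrite /ct trmx_mul map_mxM. Qed.

Lemma ct_add m n (X Y : 'M[C]_(m, n)) : ct (X + Y) = ct X + ct Y.
Proof. by rewrite /ct linearD /= map_mxD. Qed.

Lemma ct_diag n (d : 'rV[C]_n) : ct (diag_mx d) = diag_mx (map_mx Num.conj d).
Proof.
apply/matrixP => i j; rewrite !mxE eq_sym.
by case: eqP => [->|_]; rewrite ?mulr1n ?mulr0n ?conjC0.
Qed.

Lemma ct1 n : ct (1%:M : 'M[C]_n) = 1%:M.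
Proof. by apply/matrixP => i j; rewrite !mxE eq_sym; case: (i == j); rewrite /= ?conjC1 ?conjC0. Qed.

Lemma qfD n (X Y : 'M[C]_n) v : qf (X + Y) v = qf X v + qf Y v.
Proof. by rewrite /qf mulmxDr mulmxDl mxE. Qed.

Lemma qfZ n (c : C) (X : 'M[C]_n) v : qf (c *: X) v = c * qf X v.
Proof. by rewrite /qf -scalemxAr -scalemxAl mxE. Qed.

Lemma qfN n (X : 'M[C]_n) v : qf (- X) v = - qf X v.
Proof. by rewrite /qf mulmxN mulNmx mxE. Qed.

Definition dec n (X U : 'M[C]_n) (d : 'rV[C]_n) :=
  [/\ U *m ct U = 1%:M, ct U *m U = 1%:M & X = ct U *m diag_mx d *m U].

Lemma herm_dec n (X : 'M[C]_n) : ct X = X ->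
  dec X (spectralmx X) (spectral_diag X) /\
  forall i, spectral_diag X 0 i \is Num.real.
Proof.
move=> hX.
have hh : X \is hermsymmx by apply/is_hermitianmxP; rewrite expr0 scale1r.
have U1 := spectral_unitarymx X.
split; last by move=> i; have /mxOverP := hermitian_spectral_diag_real hh; apply.
have /orthomx_spectralP E := hermitian_normalmx hh.
have UU : spectralmx X *m ct (spectralmx X) = 1%:M by apply/unitarymxP.
have iU := invmx_unitary U1.
split => //.
  by rewrite /ct -[map_mx _ _]/((spectralmx X)^t*)%sesqui -iU mulVmx // unitarymx_unit.
by rewrite {1}E iU.
Qed.

Lemma qf_dec n (U : 'M[C]_n) (e : 'rV[C]_n) v :
  qf (ct U *m diag_mx e *m U) v =
  \sum_i e 0 i * ((v *m ct U) 0 i * ((v *m ct U) 0 i)^*).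
Proof.
rewrite /qf -!mulmxA mulmxA.
have -> : U *m ct v = ct (v *m ct U) by rewrite ct_mul ctK.
rewrite mulmxA mxE; apply: eq_bigr => i _.
by rewrite mul_mx_diag !mxE mulrAC mulrC.
Qed.

Lemma qf_dec_le n (U : 'M[C]_n) (e e' : 'rV[C]_n) v :
  (forall i, e 0 i <= e' 0 i) ->
  qf (ct U *m diag_mx e *m U) v <= qf (ct U *m diag_mx e' *m U) v.
Proof.
move=> h; rewrite !qf_dec; apply: ler_sum => i _.
by apply: ler_wpM2r => //; apply: mul_conjC_ge0.
Qed.

Lemma qf_dec_row n (U : 'M[C]_n) (e : 'rV[C]_n) i :
  U *m ct U = 1%:M -> qf (ct U *m diag_mx e *m U) (row i U) = e 0 i.
Proof.
move=> UU; rewrite qf_dec -row_mul UU row1 (bigD1 i) //= big1 ?addr0.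
  by rewrite !mxE !eqxx /= conjC1 !mulr1.
move=> j ji; rewrite !mxE eqxx (negbTE ji) /= conjC0 !mulr0 //.
Qed.

Lemma qf1_dec n (U : 'M[C]_n) v : ct U *m U = 1%:M ->
  qf 1%:M v = qf (ct U *m diag_mx (const_mx 1) *m U) v.
Proof. by move=> h; rewrite diag_const_mx mulmx1 h. Qed.

Lemma qfc_dec n (U : 'M[C]_n) (c : C) v : ct U *m U = 1%:M ->
  c * qf 1%:M v = qf (ct U *m diag_mx (const_mx c) *m U) v.
Proof.
move=> h; rewrite diag_const_mx mul_mx_scalar -scalemxAl h.
by rewrite qfZ.
Qed.

Lemma eig_le n (X U : 'M[C]_n) d (c : C) : dec X U d ->
  (forall v, qf X v <= c * qf 1%:M v) -> forall i, d 0 i <= c.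
Proof.
move=> [UU UU' ->] h i; have := h (row i U).
by rewrite qf_dec_row // (qfc_dec _ _ UU') qf_dec_row // mxE.
Qed.

Lemma eig_ge n (X U : 'M[C]_n) d (c : C) : dec X U d ->
  (forall v, c * qf 1%:M v <= qf X v) -> forall i, c <= d 0 i.
Proof.
move=> [UU UU' ->] h i; have := h (row i U).
by rewrite qf_dec_row // (qfc_dec _ _ UU') qf_dec_row // mxE.
Qed.

Lemma le_eig n (X U : 'M[C]_n) d (c : C) : dec X U d ->
  (forall i, d 0 i <= c) -> forall v, qf X v <= c * qf 1%:M v.
Proof.
move=> [UU UU' ->] h v; rewrite (qfc_dec _ _ UU'); apply: qf_dec_le => i.
by rewrite mxE.
Qed.

Lemma ge_eig n (X U : 'M[C]_n) d (c : C) : dec X U d ->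
  (forall i, c <= d 0 i) -> forall v, c * qf 1%:M v <= qf X v.
Proof.
move=> [UU UU' ->] h v; rewrite (qfc_dec _ _ UU'); apply: qf_dec_le => i.
by rewrite mxE.
Qed.

Lemma det_dec n (X U : 'M[C]_n) d : dec X U d -> \det X = \prod_i d 0 i.
Proof.
move=> [UU UU' ->]; rewrite !det_mulmx det_diag mulrAC -det_mulmx UU' det1.
by rewrite mul1r.
Qed.

Lemma qf_congr n (S X : 'M[C]_n) v : ct S = S ->
  qf (S *m X *m S) v = qf X (v *m S).
Proof.
move=> hS; rewrite /qf ct_mul hS !mulmxA //.
Qed.

Lemma ct_congr n (S X : 'M[C]_n) : ct S = S -> ct X = X -> ct (S *m X *m S) = S *m X *m S.
Proof. by move=> hS hX; rewrite !ct_mul hS hX mulmxA. Qed.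

Lemma isqrt n (T U : 'M[C]_n) t : dec T U t -> (forall i, 0 < t 0 i) ->
  exists S : 'M[C]_n, ct S = S /\ S *m T *m S = 1%:M.
Proof.
move=> [UU UU' ->] tpos.
pose s := \row_i (sqrtC (t 0 i))^-1.
have sreal i : (s 0 i)^* = s 0 i.
  apply: conj_Creal; rewrite mxE rpredV; apply: sqrtC_real; exact: ltW.
exists (ct U *m diag_mx s *m U); split.
  rewrite !ct_mul ctK ct_diag mulmxA; congr (_ *m _ *m _).
  by apply/matrixP => i j; rewrite !mxE; have := sreal i; rewrite mxE => ->.
have E : forall (a b : 'rV[C]_n), (ct U *m diag_mx a *m U) *m (ct U *m diag_mx b *m U)
   = ct U *m diag_mx (\row_j (a 0 j * b 0 j)) *m U.
  move=> a b; rewrite -!mulmxA (mulmxA U) UU mul1mx (mulmxA (diag_mx a)) mulmx_diag //.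
rewrite E E -[RHS]UU' -[X in _ = X *m U]mulmx1 -diag_const_mx; congr (_ *m diag_mx _ *m _).
apply/matrixP => i j; rewrite !mxE.
have tj := tpos j; have sq : sqrtC (t 0 j) != 0 by rewrite sqrtC_eq0 gt_eqF.
by rewrite -{2}(sqrtCK (t 0 j)) expr2 mulKf // divff.
Qed.


Lemma key2 (x p : C) : 0 <= x <= 1 -> 0 <= p <= 1 ->
  (1 + x) * (1 + p) <= 2 * (1 + x * p).
Proof.
move=> /andP[x0 x1] /andP[p0 p1].
rewrite -subr_ge0.
have -> : 2 * (1 + x * p) - (1 + x) * (1 + p) = (1 - x) * (1 - p) by ring.
by apply: mulr_ge0; rewrite subr_ge0.
Qed.

Lemma prod_key k (c : 'I_k.+1 -> C) : (forall i, 0 <= c i <= 1) ->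
  \prod_i (1 + c i) <= 2 ^+ k * (1 + \prod_i c i).
Proof.
elim: k c => [|k IH] c hc.
  by rewrite !big_ord1 expr0 mul1r.
rewrite big_ord_recl [X in _ <= _ * (1 + X)]big_ord_recl.
have h0 := hc ord0.
have IHc := IH (fun i => c (lift ord0 i)) (fun i => hc _).
set P := \prod_(i < k.+1) c (lift ord0 i) in IHc *.
have hP : 0 <= P <= 1.
  apply/andP; split; [apply: prodr_ge0 => i _; by case/andP: (hc (lift ord0 i))|].
  by apply: prodr_ile1 => i _; apply: hc.
apply: le_trans (_ : (1 + c ord0) * (2 ^+ k * (1 + P)) <= _).
  apply: ler_wpM2l; last exact: IHc.
  by case/andP: h0 => h _; rewrite addr_ge0.
rewrite exprSr -mulrA mulrCA.
apply: ler_wpM2l; first exact: exprn_ge0.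
exact: key2.
Qed.

Lemma prod_key' n (c : 'I_n -> C) : (0 < n)%N -> (forall i, 0 <= c i <= 1) ->
  \prod_i (1 + c i) <= 2 ^+ n.-1 * (1 + \prod_i c i).
Proof. by case: n c => // n c _; apply: prod_key. Qed.

Lemma qf1_ge0 n (v : 'rV[C]_n) : 0 <= qf 1%:M v.
Proof.
rewrite /qf mulmx1 mxE; apply: sumr_ge0 => i _; rewrite !mxE; exact: mul_conjC_ge0.
Qed.

Lemma main_mx n (A B FA FB : 'M[C]_n) (k mm : C) : (0 < n)%N ->
  ct A = A -> ct B = B -> ct FA = FA -> ct FB = FB -> 0 < mm -> 0 <= k ->
  (forall v, mm * qf 1%:M v <= qf A v) -> (forall v, mm * qf 1%:M v <= qf B v) ->
  (forall v, 0 <= qf FA v) -> (forall v, 0 <= qf FB v) ->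
  (forall v, qf FA v <= k * qf A v) -> (forall v, qf FB v <= k * qf B v) ->
  (forall v, qf B v <= qf A v) ->
  [/\ 0 <= \det (FA + FB), 0 < \det A, 0 < \det B &
      \det (FA + FB) <= k ^+ n * 2 ^+ n.-1 * (\det A + \det B)].
Proof.
move=> n0 hA hB hFA hFB mm0 k0 mA mB FA0 FB0 FAk FBk BA.
have [dA rA] := herm_dec hA; have [dB rB] := herm_dec hB.
set a := spectral_diag A in dA rA; set b := spectral_diag B in dB rB.
have apos i : 0 < a 0 i by apply: lt_le_trans mm0 _; exact: (eig_ge dA mA).
have bpos i : 0 < b 0 i by apply: lt_le_trans mm0 _; exact: (eig_ge dB mB).
have detA0 : 0 < \det A by rewrite (det_dec dA); apply: prodr_gt0 => i _.
have detB0 : 0 < \det B by rewrite (det_dec dB); apply: prodr_gt0 => i _.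
pose T := A + B.
have hT : ct T = T by rewrite /T ct_add hA hB.
have [dT rT] := herm_dec hT; set t := spectral_diag T in dT rT.
have tpos i : 0 < t 0 i.
  have mm2 : 0 < mm + mm by rewrite addr_gt0.
  apply: lt_le_trans mm2 _; apply: (eig_ge dT) => v.
  by rewrite /T qfD mulrDl lerD.
have detT0 : 0 < \det T by rewrite (det_dec dT); apply: prodr_gt0 => i _.
have [S [hS STS]] := isqrt dT tpos.
pose X := S *m (FA + FB) *m S.
have hX : ct X = X by rewrite /X ct_congr // ct_add hFA hFB.
have [dX rX] := herm_dec hX; set x := spectral_diag X in dX rX.
have xge0 i : 0 <= x 0 i.
  rewrite -(mul0r (1 : C)); have := eig_ge dX (c := 0); rewrite mul0r; apply => v.
  by rewrite mul0r /X qf_congr // qfD addr_ge0.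
have xlek i : x 0 i <= k.
  apply: (eig_le dX) => v; rewrite /X qf_congr // -STS qf_congr // qfD /T qfD mulrDr.
  exact: lerD.
have detX : \det X <= k ^+ n.
  rewrite (det_dec dX).
  have -> : k ^+ n = \prod_(i < n) k by rewrite prodr_const card_ord.
  by apply: ler_prod => i _; rewrite xge0 xlek.
have detX0 : 0 <= \det X by rewrite (det_dec dX); apply: prodr_ge0.
have dST : \det S * \det T * \det S = 1 by rewrite -!det_mulmx STS det1.
have eF : \det (FA + FB) = \det X * \det T.
  rewrite /X !det_mulmx -{1}[\det (FA + FB)]mulr1 -dST; ring.
have [S' [hS' SAS]] := isqrt dA apos.
pose Cm := S' *m B *m S'.
have hC : ct Cm = Cm by rewrite /Cm ct_congr.
have [dC rC] := herm_dec hC; set c := spectral_diag Cm in dC rC.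
have cge0 i : 0 <= c 0 i.
  rewrite -(mul0r (1 : C)); have := eig_ge dC (c := 0); rewrite mul0r; apply => v.
  rewrite mul0r /Cm qf_congr //; apply: le_trans (mB _).
  by rewrite mulr_ge0 ?qf1_ge0 // ltW.
have cle1 i : c 0 i <= 1.
  apply: (eig_le dC) => v; rewrite mul1r /Cm qf_congr // -SAS qf_congr //.
have dC1 : \det (1%:M + Cm) = \prod_i (1 + c 0 i).
  case: dC => [UU UU' EC].
  have : dec (1%:M + Cm) (spectralmx Cm) (const_mx 1 + c).
    split => //; rewrite raddfD /= mulmxDr mulmxDl diag_const_mx mulmx1 UU'.
    by rewrite -EC.
  by move/det_dec => ->; apply: eq_bigr => i _; rewrite !mxE.
have dA' : \det S' * \det A * \det S' = 1 by rewrite -!det_mulmx SAS det1.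
have e1 : \det (1%:M + Cm) = \det S' * \det T * \det S'.
  by rewrite -!det_mulmx /T mulmxDr mulmxDl SAS.
have eT : \det T = \det A * \prod_i (1 + c 0 i).
  rewrite -dC1 e1 -{1}[\det T]mulr1 -dA'; ring.
have eB : \det B = \det A * \prod_i c 0 i.
  rewrite -(det_dec dC) /Cm !det_mulmx -{1}[\det B]mulr1 -dA'; ring.
have Tle : \det T <= 2 ^+ n.-1 * (\det A + \det B).
  rewrite eT eB -{2}[\det A]mulr1 -mulrDr mulrCA; apply: ler_wpM2l; first exact: ltW.
  by apply: prod_key' => // i; rewrite cge0 cle1.
split => //.
  by rewrite eF mulr_ge0 // ltW.
rewrite eF -mulrA; apply: le_trans (_ : k ^+ n * \det T <= _).
  by apply: ler_wpM2r => //; exact: ltW.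
by apply: ler_wpM2l => //; apply: exprn_ge0.
Qed.

End Gen.

Unset Implicit Arguments.

Lemma exprD_ge (R : realDomainType) (x y : R) k : 0 <= x -> 0 <= y ->
  x ^+ k.+1 + y ^+ k.+1 <= (x + y) ^+ k.+1.
Proof.
move=> x0 y0; elim: k => [|k IH]; first by rewrite !expr1.
rewrite [X in _ <= X]exprS.
apply: le_trans (_ : (x + y) * (x ^+ k.+1 + y ^+ k.+1) <= _); last first.
  by apply: ler_wpM2l => //; rewrite addr_ge0.
rewrite mulrDl !mulrDr !exprS -subr_ge0.
set u := x ^+ k; set w := y ^+ k.
have -> : x * (x * u) + x * (y * w) + (y * (x * u) + y * (y * w)) - (x * (x * u) + y * (y * w))
  = x * (y * w) + y * (x * u) by ring.
by apply: addr_ge0; apply: mulr_ge0 => //; apply: mulr_ge0 => //; apply: exprn_ge0.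
Qed.

Lemma final (R : realType) (n : nat) (D K a b : R) : (0 < n)%N -> 0 <= D -> 0 <= K ->
  0 < a -> 0 < b -> D <= K ^+ n * 2 ^+ n.-1 * (a + b) ->
  powR D (n%:R^-1) <= powR 2 (1 - n%:R^-1) * K * (powR a (n%:R^-1) + powR b (n%:R^-1)).
Proof.
move=> n0 D0 K0 a0 b0 hD.
set p := n%:R^-1.
have nR : (n%:R : R) != 0 by rewrite pnatr_eq0 -lt0n.
have np : n%:R * p = 1 by rewrite /p divff.
have c2 : 0 <= (2 : R) ^+ n.-1 by apply: exprn_ge0.
have cK : 0 <= K ^+ n by apply: exprn_ge0.
have ab : 0 <= a + b by rewrite addr_ge0 // ltW.
apply: le_trans (_ : powR (K ^+ n * 2 ^+ n.-1 * (a + b)) p <= _).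
  apply: ge0_ler_powR => //; first by rewrite /p invr_ge0.
  by rewrite nnegrE !mulr_ge0.
rewrite !powRM ?mulr_ge0 //.
have eK : powR (K ^+ n) p = K by rewrite -powR_mulrn // -powRrM np powRr1.
have e2 : powR ((2 : R) ^+ n.-1) p = powR 2 (1 - p).
  rewrite -powR_mulrn // -powRrM; congr powR.
  have hn : n%:R = n.-1%:R + 1 :> R by rewrite natr1 prednK.
  by rewrite -[X in _ = X - p]np hn mulrDl mul1r addrK.
rewrite eK e2 [K * _]mulrC; apply: ler_wpM2l; first by rewrite mulr_ge0 ?powR_ge0.
set x := powR a p; set y := powR b p.
have ex : a = x ^+ n by rewrite -powR_mulrn ?powR_ge0 // -powRrM mulrC np powRr1 // ltW.
have ey : b = y ^+ n by rewrite -powR_mulrn ?powR_ge0 // -powRrM mulrC np powRr1 // ltW.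
have xy : 0 <= x + y by rewrite addr_ge0 // powR_ge0.
apply: le_trans (_ : powR ((x + y) ^+ n) p <= _).
  apply: ge0_ler_powR; first by rewrite /p invr_ge0.
  - by rewrite nnegrE ex ey addr_ge0 // exprn_ge0 // powR_ge0.
  - by rewrite nnegrE exprn_ge0.
  - rewrite ex ey -(prednK n0); apply: exprD_ge; exact: powR_ge0.
by rewrite -powR_mulrn // -powRrM np powRr1.
Qed.

Section Spec.
Variable R : realType.
Local Notation C := (R[i]).

Lemma qformE n (X : 'M[C]_n) v : qform X v = qf X v.
Proof. by []. Qed.

Lemma realC (x : R) : (x%:C)%C \is Num.real.
Proof. by apply/complex_realP; exists x. Qed.

Lemma loe_lo n (m : R) (X : 'M[C]_n) : loewner_le ((m%:C)%C%:M) X ->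
  forall v, (m%:C)%C * qf 1%:M v <= qf X v.
Proof.
move=> [_ h] v; have := h v; rewrite qformE qfD qfN -[(m%:C)%C%:M]scalemx1 qfZ subr_ge0 //.
Qed.

Lemma loe_hi n (M : R) (X : 'M[C]_n) : loewner_le X ((M%:C)%C%:M) ->
  forall v, qf X v <= (M%:C)%C * qf 1%:M v.
Proof.
move=> [_ h] v; have := h v; rewrite qformE qfD qfN -[(M%:C)%C%:M]scalemx1 qfZ subr_ge0 //.
Qed.


Lemma Re_real (x : C) : x \is Num.real -> (complex.Re x)%:C%C = x.
Proof. exact: RRe_real. Qed.

Lemma fcalc_props n (X : 'M[C]_n) (f : R -> R) (m M k : R) :
  ct X = X -> 0 < m ->
  (forall v, (m%:C)%C * qf 1%:M v <= qf X v) ->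
  (forall v, qf X v <= (M%:C)%C * qf 1%:M v) ->
  (forall x, m <= x <= M -> 0 <= f x <= k * x) ->
  [/\ ct (fcalc f X) = fcalc f X, (forall v, 0 <= qf (fcalc f X) v) &
      (forall v, qf (fcalc f X) v <= (k%:C)%C * qf X v)].
Proof.
move=> hX m0 lo hi hf.
have [dX rX] := herm_dec hX.
have [UU UU' EX] := dX.
set U := spectralmx X in dX UU UU' EX *; set a := spectral_diag X in dX rX EX *.
have aR i : m <= complex.Re (a 0 i) <= M.
  rewrite -!lecR RRe_real // (eig_ge dX lo) //.
  exact: (eig_le dX hi).
pose e := map_mx (fun z : C => ((f (complex.Re z))%:C)%C) a.
have EF : fcalc f X = ct U *m diag_mx e *m U.
  by rewrite /fcalc invmx_unitary // spectral_unitarymx.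
have eR i : 0 <= e 0 i <= (k%:C)%C * a 0 i.
  have ha : a 0 i = (complex.Re (a 0 i))%:C%C by rewrite RRe_real.
  rewrite mxE [X in _ * X]ha -rmorphM /= !lecR; exact: hf.
split.
- rewrite EF !ct_mul ctK ct_diag mulmxA; congr (_ *m diag_mx _ *m _).
  by apply/matrixP => i j; rewrite !mxE conj_Creal // realC.
- move=> v; rewrite EF; apply: le_trans (qf_dec_le (e := 0) _ _ _).
    by rewrite qf_dec big1 // => i _; rewrite mxE mul0r.
  by move=> i; rewrite mxE; case/andP: (eR i).
- move=> v; rewrite EF EX -qfZ.
  have -> : (k%:C)%C *: (ct U *m diag_mx a *m U) = ct U *m diag_mx ((k%:C)%C *: a) *m U.
    by rewrite linearZ /= -scalemxAr -scalemxAl.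
  by apply: qf_dec_le => i; rewrite [X in _ <= X]mxE; case/andP: (eR i).
Qed.


Lemma eigs_size n (X : 'M[C]_n) : size (eigs X) = n.
Proof. by rewrite /eigs size_sort size_map size_enum_ord. Qed.

Lemma lam_mem n (X : 'M[C]_n) i :
  exists2 j, (j < n)%N & lam X j = complex.Re (spectral_diag X 0 i).
Proof.
set r := complex.Re _.
have hr : r \in eigs X by rewrite /eigs mem_sort; apply: map_f; rewrite mem_enum.
exists (index r (eigs X)); first by have := index_mem r (eigs X); rewrite hr eigs_size.
by rewrite /lam nth_index.
Qed.

Lemma lam_mono n (X : 'M[C]_n) i j : (i <= j)%N -> (j < n)%N -> lam X j <= lam X i.
Proof.
move=> ij jn.
have so : sorted (fun a b : R => b <= a) (eigs X).
  by apply: sort_sorted => a b; exact: le_total.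
have := @sorted_leq_nth _ (fun a b : R => b <= a) _ _ 0 _ so i j.
apply.
- by move=> y x z hxy hyz; exact: le_trans hyz hxy.
- by move=> x.
- by rewrite inE eigs_size (leq_ltn_trans ij jn).
- by rewrite inE eigs_size.
- exact: ij.
Qed.

Lemma sep n (X Y : 'M[C]_n) (r : R) : ct X = X -> ct Y = Y ->
  (forall i, complex.Re (spectral_diag Y 0 i) <= r) ->
  (forall i, r <= complex.Re (spectral_diag X 0 i)) ->
  forall v, qf Y v <= qf X v.
Proof.
move=> hX hY hYr hXr v.
have [dX rX] := herm_dec hX; have [dY rY] := herm_dec hY.
apply: (@le_trans _ _ ((r%:C)%C * qf 1%:M v)).
  apply: (le_eig dY) => i; rewrite -(RRe_real (rY i)) lecR; exact: hYr.
apply: (ge_eig dX) => i; rewrite -(RRe_real (rX i)) lecR; exact: hXr.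
Qed.


Lemma close (F DA DB : C) (k : R) n : 0 <= F -> 0 < DA -> 0 < DB ->
  F <= (k%:C)%C ^+ n * 2 ^+ n.-1 * (DA + DB) ->
  [/\ 0 <= complex.Re F, 0 < complex.Re DA, 0 < complex.Re DB &
   complex.Re F <= k ^+ n * 2 ^+ n.-1 * (complex.Re DA + complex.Re DB)].
Proof.
move=> F0 A0 B0 hF.
have rF := ger0_real F0; have rA := gtr0_real A0; have rB := gtr0_real B0.
move: F0 A0 B0 hF; rewrite -(RRe_real rF) -(RRe_real rA) -(RRe_real rB).
rewrite !lecR !ltcR => -> -> ->; split => //.
by rewrite -lecR !rmorphM !rmorphXn !rmorphD /= rmorph1.
Qed.

Lemma ct_herm n (X : 'M[C]_n) : X \is hermsymmx -> ct X = X.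
Proof. by move/is_hermitianmxP; rewrite expr0 scale1r => {2}->. Qed.

End Spec.

Arguments ct_herm {R n X}.
Arguments fcalc_props {R n X f m M k}.
Arguments loe_lo {R n m X}.
Arguments loe_hi {R n M X}.
Arguments sep {R n X Y r}.
Arguments lam_mem {R n} X i.
Arguments lam_mono {R n X i j}.
Arguments close {R F DA DB k n}.
Arguments final {R n D K a b}.

Theorem theorem3p3 (R : realType) (n : nat) (m M : R) (A B : 'M[R[i]]_n)
    (f : R -> R) :
  (0 < n)%N -> 0 < m -> m < M ->
  posdef A -> posdef B ->
  loewner_le (m%:C)%C%:M A -> loewner_le A (M%:C)%C%:M ->
  loewner_le (m%:C)%C%:M B -> loewner_le B (M%:C)%C%:M ->
  (forall x : R, 0 <= x -> 0 <= f x) -> f 0 = 0 ->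
  convex_nonneg f -> differentiable_nonneg f ->
  ((forall j : 'I_n, lam B j < lam A n.-1) \/
   (forall j : 'I_n, lam A 0 < lam B j)) ->
  powR (rdet (fcalc f A + fcalc f B)) (n%:R^-1)
    <= powR 2 (1 - n%:R^-1) * (f M / M)
       * (powR (rdet A) (n%:R^-1) + powR (rdet B) (n%:R^-1)).
Proof.
move=> n0 m0 mM pA pB lA hA lB hB f0 f00 fconv _ hsep.
have ctA := ct_herm pA.1; have ctB := ct_herm pB.1.
have M0 : 0 < M := lt_trans m0 mM.
set k := f M / M.
have k0 : 0 <= k by rewrite /k divr_ge0 // ?f0 // ltW.
have hf : forall x, m <= x <= M -> 0 <= f x <= k * x.
  move=> x /andP[mx xM]; have x0 : 0 <= x by rewrite (le_trans (ltW m0)).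
  rewrite f0 //=.
  have t0 : 0 <= x / M by rewrite divr_ge0 // ltW.
  have t1 : x / M <= 1 by rewrite ler_pdivrMr // mul1r.
  have := fconv M 0 (x / M) (ltW M0) (lexx 0) t0 t1.
  rewrite f00 !mulr0 !addr0 divfK ?gt_eqF // => h; apply: le_trans h _.
  by rewrite le_eqVlt; apply/orP; left; apply/eqP; rewrite /k; ring.
have [cFA FA0 FAk] := fcalc_props ctA m0 (loe_lo lA) (loe_hi hA) hf.
have [cFB FB0 FBk] := fcalc_props ctB m0 (loe_lo lB) (loe_hi hB) hf.
have mC : 0 < (m%:C)%C by rewrite ltcR.
have kC : 0 <= (k%:C)%C by rewrite lecR.
rewrite /rdet.
case: hsep => H.
- have BA : forall v, qf B v <= qf A v.
    apply: (sep ctA ctB (r := lam A n.-1)) => i.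
      have [j jn ej] := lam_mem B i; rewrite -ej; apply: ltW; exact: (H (Ordinal jn)).
    have [j jn ej] := lam_mem A i; rewrite -ej; apply: lam_mono.
      by rewrite -ltnS prednK.
    by rewrite prednK.
  have [F0 A0 B0 Fle] := main_mx n0 ctA ctB cFA cFB mC kC (loe_lo lA) (loe_lo lB)
     FA0 FB0 FAk FBk BA.
  have [F0' A0' B0' Fle'] := close F0 A0 B0 Fle.
  exact: final.
- have AB : forall v, qf A v <= qf B v.
    apply: (sep ctB ctA (r := lam A 0)) => i.
      have [j jn ej] := lam_mem A i; rewrite -ej; exact: lam_mono.
    have [j jn ej] := lam_mem B i; rewrite -ej; apply: ltW; exact: (H (Ordinal jn)).
  have [F0 B0 A0 Fle] := main_mx n0 ctB ctA cFB cFA mC kC (loe_lo lB) (loe_lo lA)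
     FB0 FA0 FBk FAk AB.
  rewrite addrC [\det B + _]addrC in F0 Fle.
  have [F0' A0' B0' Fle'] := close F0 A0 B0 Fle.
  exact: final.
Qed.
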